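(* Let $c\ge2$, $d\ge1$, and let $Y\subseteq\Sigma^c$ be a zero-set with $|Y|=4$. Then $Y$ survives $d$ rounds of tornado tabulation with probability $\left(\left(3-2/|\Sigma|\right)/|\Sigma|\right)^d$.
   Context: Let $\Sigma=\{0,\dots,2^k-1\}$, identified with $k$-bit strings, $\oplus$ bitwise xor. A simple tabulation hash function $g:\Sigma^b\to\Sigma$ is $g(x_1\cdots x_b)=T_1[x_1]\oplus\cdots\oplus T_b[x_b]$ with independent fully random tables $T_i:\Sigma\to\Sigma$. Let $\tilde h_1,\dots,\tilde h_d$ be mutually independent simple tabulation functions with $\tilde h_i:\Sigma^{c+i-1}\to\Sigma$. The simple derived key of $x=x_1\cdots x_c$ is $\tilde h'(x)=\tilde x_1\cdots\tilde x_{c+d}$ with $\tilde x_i=x_i$ for $i\le c$ and $\tilde x_i=\tilde h_{i-c}(\tilde x_1\cdots\tilde x_{i-1})$ for $c<i\le c+d$. A set $Y$ of keys in $\Sigma^b$ is a zero-set if for every position $i$ and every character $a$, the number of $y\in Y$ with $y_i=a$ is even. A zero-set $Y\subseteq\Sigma^c$ survives $d$ rounds of tornado tabulation if $\tilde h'(Y)\subseteq\Sigma^{c+d}$ is a zero-set. *)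

(* Defs.v *)
From mathcomp Require Import all_boot all_order all_algebra.
Set Implicit Arguments. Unset Strict Implicit. Unset Printing Implicit Defensive.
Import Order.TTheory GRing.Theory Num.Theory.
Local Open Scope ring_scope.

(* The alphabet Sigma = k-bit strings; bitwise xor = addition in 'F_2^k. *)
Definition Sigma (k : nat) := 'rV['F_2]_k.

Definition key (k b : nat) := {ffun 'I_b -> Sigma k}.

(* Simple tabulation with tables T : 'I_b -> (Sigma -> Sigma), applied to a
   key given as a sequence of characters (only the first b are used). *)
Definition simple_tab (k b : nat) (T : {ffun 'I_b -> {ffun Sigma k -> Sigma k}})
  (x : seq (Sigma k)) : Sigma k :=
  \sum_(j < b) T j (nth 0 x j).

(* All the random tables for d rounds: round i (0-indexed) is a simple
   tabulation function on Sigma^(c+i). *)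
Definition tables (k c d : nat) :=
  {dffun forall i : 'I_d, {ffun 'I_(c + i) -> {ffun Sigma k -> Sigma k}}}.

Definition derived_seq (k c d : nat) (tab : tables k c d) (x : key k c)
  : seq (Sigma k) :=
  foldl (fun s (i : 'I_d) => rcons s (simple_tab (tab i) s))
        [seq x j | j <- enum 'I_c] (enum 'I_d).

Definition derived_key (k c d : nat) (tab : tables k c d) (x : key k c)
  : key k (c + d) :=
  [ffun j : 'I_(c + d) => nth 0 (derived_seq tab x) j].

Definition zero_set (k b : nat) (Y : {set key k b}) : bool :=
  [forall i : 'I_b, forall a : Sigma k, ~~ odd #|[set y in Y | y i == a]|].

Definition survives (k c d : nat) (Y : {set key k c}) (tab : tables k c d) : bool :=
  zero_set (derived_key tab @: Y).

(* Probability over uniformly random (fully random, independent) tables. *)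
Definition survive_prob (k c d : nat) (Y : {set key k c}) : rat :=
  (#|[set tab : tables k c d | survives Y tab]|%:R
     / #|{: tables k c d}|%:R).

(* Main.v *)
Require Import Defs.
From mathcomp Require Import all_boot all_order all_algebra.
Import GRing.Theory Num.Theory.
Local Open Scope ring_scope.
Set Implicit Arguments. Unset Strict Implicit. Unset Printing Implicit Defensive.

Lemma addxx k (x : Sigma k) : x + x = 0.
Proof.
apply/matrixP => i j; rewrite !mxE. move: (x i j).
case=> [[|[|n]]] //= H; by apply/val_inj.
Qed.

Section Fold.
Variables (T I : Type) (f : seq T -> I -> T).
Let F := fun s i => rcons s (f s i).
Lemma foldl_size l s0 : size (foldl F s0 l) = (size s0 + size l)%N.
Proof. elim: l s0 => [|i l IH] s0 /=; first by rewrite addn0.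
by rewrite IH /F size_rcons addSnnS. Qed.
Lemma foldl_nth x0 l s0 j : (j < size s0)%N -> nth x0 (foldl F s0 l) j = nth x0 s0 j.
Proof. elim: l s0 => [|i l IH] s0 //= Hj.
rewrite IH /F ?size_rcons ?nth_rcons ?Hj //. by apply: ltnW. Qed.
End Fold.

Lemma eq_foldl_ext (T I : Type) (f g : seq T -> I -> seq T) l s0 :
  (forall s i, f s i = g s i) -> foldl f s0 l = foldl g s0 l.
Proof. move=> H; elim: l s0 => //= i l IH s0; by rewrite H IH. Qed.

Lemma foldl_map' (T U R : Type) (f : R -> U -> R) (g : T -> U) z s :
  foldl f z (map g s) = foldl (fun a x => f a (g x)) z s.
Proof. by elim: s z => //= x s IH z. Qed.

Section S.
Variables (k c : nat).
Definition R_ (i : nat) := {ffun 'I_(c + i) -> {ffun Sigma k -> Sigma k}}.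
Definition restrict d (tab : tables k c d.+1) : tables k c d :=
  [ffun i : 'I_d => tab (widen_ord (leqnSn d) i)].
Definition lastt d (tab : tables k c d.+1) : R_ d := tab ord_max.
Lemma card_tables d : #|{: tables k c d}| = (\prod_(i < d) #|{: R_ i}|)%N.
Proof. rewrite card_dep_ffun. rewrite foldrE big_map big_enum /=. done. Qed.

Lemma ds_size d (tab : tables k c d) x : size (derived_seq tab x) = (c + d)%N.
Proof. by rewrite /derived_seq foldl_size size_map !size_enum_ord. Qed.

Lemma ds_prefix d (tab : tables k c d) x (j : 'I_c) : nth 0 (derived_seq tab x) j = x j.
Proof.
rewrite /derived_seq foldl_nth ?size_map ?size_enum_ord //.
rewrite (nth_map j) ?nth_ord_enum //.
- by rewrite size_enum_ord.
- have := size_enum_ord c; rewrite enumT unlock /= => ->. done.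
Qed.

Lemma ds_step d (tab : tables k c d.+1) x :
  derived_seq tab x = rcons (derived_seq (restrict tab) x)
     (simple_tab (lastt tab) (derived_seq (restrict tab) x)).
Proof.
rewrite /derived_seq enum_ordSr foldl_rcons foldl_map'.
congr (rcons _ _); last congr simple_tab.
all: apply: eq_foldl_ext => s i; by rewrite /restrict ffunE.
Qed.
End S.


Definition evs (T : eqType) (s : seq T) (U : finType) (f : U -> T) := [forall a, ~~ odd (count (pred1 (f a)) s)].
Definition ev4 (T : finType) (a0 a1 a2 a3 : T) : bool :=
  [forall a : T, ~~ odd (count (pred1 a) [:: a0; a1; a2; a3])].
Definition pairs4 (T : eqType) (a b c d : T) : bool :=
  [|| (a == b) && (c == d), (a == c) && (b == d) | (a == d) && (b == c)].

Ltac killneq := match goal with H : is_true (?x != ?x) |- _ => by rewrite eqxx in H end.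
Ltac crush := repeat (try killneq; rewrite ?eqxx /=; match goal with |- context[?x == ?y] => case: (eqVneq x y) => [?|?]; try subst end); try killneq; rewrite ?eqxx //=.

Lemma ev4P (T : finType) (a b c d : T) : ev4 a b c d = pairs4 a b c d.
Proof.
apply/idP/idP.
- move/forallP => H; move: (H a) (H b) (H c) (H d); rewrite /pairs4 /=. crush.
- rewrite /pairs4 /ev4; move=> /orP [|/orP []] /andP [/eqP E1 /eqP E2]; subst; apply/forallP => e /=; crush.
Qed.

From mathcomp Require Import zify.

Lemma perm4_23 (T : eqType) (a b c d : T) : perm_eq [:: a; b; c; d] [:: a; b; d; c].
Proof. apply/permP => p /=; lia. Qed.
Lemma perm4_13 (T : eqType) (a b c d : T) : perm_eq [:: a; b; c; d] [:: a; d; c; b].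
Proof. apply/permP => p /=; lia. Qed.

Lemma ev4_perm (T : finType) (a b c d a' b' c' d' : T) :
  perm_eq [:: a; b; c; d] [:: a'; b'; c'; d'] -> ev4 a b c d = ev4 a' b' c' d'.
Proof. move=> H; apply: eq_forallb => e; by rewrite (permP H). Qed.

Lemma card_in_seq (T : finType) (s : seq T) (P : pred T) :
  uniq s -> #|[set y in [set x in s] | P y]| = count P s.
Proof.
move=> us; rewrite -size_filter; move/card_uniqP: (filter_uniq P us) => <-.
by apply: eq_card => y; rewrite !inE mem_filter andbC.
Qed.

Lemma card_img (T U : finType) (f : T -> U) (A : {set T}) (P : pred U) :
  injective f -> #|[set y in f @: A | P y]| = #|[set x in A | P (f x)]|.
Proof.
move=> fi; rewrite -(card_imset _ fi); apply: eq_card => y; rewrite !inE.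
apply/andP/imsetP => [[/imsetP [x Ax ->] Px]|[x]]; first by exists x; rewrite // inE Ax.
by rewrite inE => /andP [Ax Px] ->; split => //; apply: imset_f.
Qed.

Lemma forall_iota n (P : nat -> bool) : [forall i : 'I_n, P i] = all P (iota 0 n).
Proof.
apply/idP/idP => [/forallP H | /allP H]; [apply/allP => j | apply/forallP => i].
  by rewrite mem_iota add0n => /andP [_ Hj]; apply: (H (Ordinal Hj)).
by apply: H; rewrite mem_iota add0n ltn_ord.
Qed.

Lemma zero_set_img k b b' (f : key k b -> key k b') (x0 x1 x2 x3 : key k b) :
  injective f -> uniq [:: x0; x1; x2; x3] ->
  zero_set (f @: [set x in [:: x0; x1; x2; x3]]) =
  [forall i, ev4 (f x0 i) (f x1 i) (f x2 i) (f x3 i)].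
Proof.
move=> fi u; apply: eq_forallb => i; apply: eq_forallb => a.
by rewrite card_img // card_in_seq.
Qed.

Lemma zero_set_seq k b (x0 x1 x2 x3 : key k b) :
  uniq [:: x0; x1; x2; x3] ->
  zero_set [set x in [:: x0; x1; x2; x3]] =
  [forall i, ev4 (x0 i) (x1 i) (x2 i) (x3 i)].
Proof.
move=> u; rewrite -(zero_set_img (f := id)) //; congr zero_set.
by apply/setP => y; rewrite imset_id.
Qed.

Lemma exists_diff k b (x y : key k b) : x != y -> exists j, x j != y j.
Proof.
move=> nxy; apply/existsP; move: nxy; apply: contraR; rewrite negb_exists => /forallP H.
by apply/eqP/ffunP => j; apply/eqP; move: (H j); rewrite negbK.
Qed.

Definition pat1 k b (x0 x1 x2 x3 : key k b) (j : 'I_b) :=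
  [&& x0 j == x2 j, x1 j == x3 j & x0 j != x1 j].
Definition pat2 k b (x0 x1 x2 x3 : key k b) (j : 'I_b) :=
  [&& x0 j == x1 j, x2 j == x3 j & x0 j != x2 j].

Lemma structure k c (Y : {set key k c}) : zero_set Y -> #|Y| = 4%N ->
  exists x0 x1 x2 x3 j1 j2, [/\ Y = [set x in [:: x0; x1; x2; x3]],
     uniq [:: x0; x1; x2; x3], (forall i, ev4 (x0 i) (x1 i) (x2 i) (x3 i)),
     pat1 x0 x1 x2 x3 j1 & pat2 x0 x1 x2 x3 j2].
Proof.
move=> zY cY.
have eY : Y = [set x in enum Y] by rewrite set_enum.
have uY := enum_uniq (mem Y).
have sY : size (enum Y) = 4%N by rewrite -cardE.
move: eY uY sY; case: (enum Y) => [|a0 [|a1 [|a2 [|a3 [|? ?]]]]] //= eY uY _.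
have uY' : uniq [:: a0; a1; a2; a3] by [].
have ev : forall i, ev4 (a0 i) (a1 i) (a2 i) (a3 i).
  by move: zY; rewrite eY zero_set_seq // => /forallP.
have [y2 [y3 [j1 [pe [e1 [e2 n1]]]]]] : exists y2 y3 j1,
   perm_eq [:: a0; a1; a2; a3] [:: a0; a1; y2; y3] /\
   a0 j1 == y2 j1 /\ a1 j1 == y3 j1 /\ a0 j1 != a1 j1.
  have n01 : a0 != a1 by move: uY; rewrite /= !inE; case: (a0 == a1).
  have [j nj] := exists_diff n01.
  have := ev j; rewrite ev4P /pairs4 (negbTE nj) /=.
  case/orP => /andP [f1 f2].
  - by exists a2, a3, j; rewrite f1 f2 nj perm_refl.
  - exists a3, a2, j; split; first exact: perm4_23.
    by rewrite f1 f2 nj.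
have uY2 : uniq [:: a0; a1; y2; y3] by rewrite -(perm_uniq pe).
have eY2 : Y = [set x in [:: a0; a1; y2; y3]].
  by rewrite eY; apply/setP => x; rewrite !in_set (perm_mem pe).
have ev2 : forall i, ev4 (a0 i) (a1 i) (y2 i) (y3 i).
  move=> i; rewrite -(ev4_perm (perm_map (fun x : key k c => x i) pe)); exact: ev.
have n02 : a0 != y2 by move: uY2; rewrite /= !inE; case: (a0 == y2); rewrite ?orbT.
have [j2 nj2] := exists_diff n02.
have := ev2 j2; rewrite ev4P /pairs4 (negbTE nj2) andFb orFb.
case/orP => /andP [f1 f2].
- exists a0, a1, y2, y3, j1, j2; split => //.
  + by rewrite /pat1 e1 e2 n1.
  + by rewrite /pat2 f1 f2 nj2.
- have pe2 := perm4_13 a0 a1 y2 y3.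
  exists a0, y3, y2, a1, j1, j2; split.
  + by rewrite eY2; apply/setP => x; rewrite !in_set (perm_mem pe2).
  + exact: (etrans (esym (perm_uniq pe2)) uY2).
  + move=> i; rewrite -(ev4_perm (perm_map (fun x : key k c => x i) pe2)); exact: ev2.
  + by rewrite /pat1 e1 eq_sym e2 -(eqP e2).
  + by rewrite /pat2 f1 eq_sym f2 nj2.
Qed.


Lemma oppxx k (x : Sigma k) : - x = x.
Proof. by rewrite -[LHS]addr0 -(addxx x) addrA addNr add0r. Qed.
Lemma addr_eqr k (x u : Sigma k) : (x + u == u) = (x == 0).
Proof. by rewrite -subr_eq0 addrK. Qed.

Definition good k (u v : Sigma k) := [|| u == 0, v == 0 | u == v].

Lemma pairs_sum k (f : Sigma k -> Sigma k) a b c d :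
  pairs4 a b c d -> f a + f b + f c + f d = 0.
Proof.
case/orP => [|/orP []] /andP [/eqP <- /eqP <-].
- by rewrite addxx add0r addxx.
- by rewrite (addrAC (f a) (f b) (f a)) addxx add0r addxx.
- by rewrite -(addrA (f a) (f b) (f b)) addxx addr0 addxx.
Qed.

Lemma pairs_good k (a b c d : Sigma k) :
  a + b + c + d = 0 -> pairs4 a b c d = good (a + b) (a + c).
Proof.
move/eqP; rewrite addr_eq0 oppxx => /eqP <-.
rewrite /pairs4 /good (inj_eq (addrI a)) !addr_eq0 !oppxx.
case: (eqVneq a b) => [<-|nab] /=; first by rewrite addxx add0r eqxx.
case: (eqVneq a c) => [<-|nac] /=; first by rewrite addrAC addxx add0r eqxx.
case: (eqVneq b c) => [<-|nbc] /=; last by rewrite !andbF.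
by rewrite -addrA addxx addr0 eqxx.
Qed.

Section Core.
Variables (k m : nat) (s0 s1 s2 s3 : seq (Sigma k)) (j1 j2 : 'I_m).
Hypothesis Hall : forall j : 'I_m,
  ev4 (nth 0 s0 j) (nth 0 s1 j) (nth 0 s2 j) (nth 0 s3 j).
Hypothesis P1 : [&& nth 0 s0 j1 == nth 0 s2 j1, nth 0 s1 j1 == nth 0 s3 j1
                  & nth 0 s0 j1 != nth 0 s1 j1].
Hypothesis P2 : [&& nth 0 s0 j2 == nth 0 s1 j2, nth 0 s2 j2 == nth 0 s3 j2
                  & nth 0 s0 j2 != nth 0 s2 j2].

Local Notation Rm := {ffun 'I_m -> {ffun Sigma k -> Sigma k}}.
Local Notation h T s := (@simple_tab k m T s).
Let a1 := nth 0 s0 j1.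
Let a2 := nth 0 s0 j2.
Definition Zf (T : Rm) : Sigma k * Sigma k := (h T s0 + h T s1, h T s0 + h T s2).

Lemma W0 (T : Rm) : h T s0 + h T s1 + h T s2 + h T s3 = 0.
Proof.
rewrite /simple_tab -!big_split /=; apply: big1 => j _.
apply: pairs_sum; by rewrite -ev4P.
Qed.

Lemma good_iff (T : Rm) : ev4 (h T s0) (h T s1) (h T s2) (h T s3) = good (Zf T).1 (Zf T).2.
Proof. by rewrite ev4P pairs_good // W0. Qed.

Definition phi (u v : Sigma k) (T : Rm) : Rm :=
  [ffun j => [ffun x => T j x + (if (j == j1) && (x == a1) then u else 0)
                              + (if (j == j2) && (x == a2) then v else 0)]].

Lemma sum_delta (j0 : 'I_m) (P : 'I_m -> bool) (u : Sigma k) :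
  \sum_(j < m) (if (j == j0) && P j then u else 0) = if P j0 then u else 0.
Proof. by rewrite (bigD1 j0) //= eqxx big1 ?addr0 // => j /negbTE ->. Qed.

Lemma h_phi u v T s : h (phi u v T) s =
  h T s + (if nth 0 s j1 == a1 then u else 0) + (if nth 0 s j2 == a2 then v else 0).
Proof.
rewrite /simple_tab; under eq_bigr do rewrite !ffunE.
by rewrite !big_split /= !sum_delta.
Qed.

Lemma Zf_phi u v T : Zf (phi u v T) = ((Zf T).1 + u, (Zf T).2 + v).
Proof.
case/and3P: P1 => e02 e13 n01; case/and3P: P2 => e01 e23 n02.
have f1 : (s1`_j1 == s0`_j1) = false by rewrite eq_sym (negbTE n01).
have f2 : (s2`_j1 == s0`_j1) = true by rewrite eq_sym.
have f3 : (s1`_j2 == s0`_j2) = true by rewrite eq_sym.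
have f4 : (s2`_j2 == s0`_j2) = false by rewrite eq_sym (negbTE n02).
rewrite /Zf !h_phi /a1 /a2 /= !eqxx f1 f2 f3 f4 !addr0; congr (_, _).
- rewrite (addrACA _ v) addxx addr0; exact: addrAC.
- rewrite (addrAC (h T s0) u v) (addrACA _ u) addxx addr0; exact: addrAC.
Qed.

Lemma phi_inj u v : injective (phi u v).
Proof.
move=> T T' /ffunP H; apply/ffunP => j; apply/ffunP => x.
by move: (H j) => /ffunP /(_ x); rewrite !ffunE => /addIr /addIr.
Qed.

Definition fib (z : Sigma k * Sigma k) := [set T : Rm | Zf T == z].

Definition z0 : Sigma k * Sigma k := (0, 0).

Lemma fib_card z : #|fib z| = #|fib z0|.
Proof.
rewrite -(card_preimset (fib z) (@phi_inj z.1 z.2)); apply: eq_card => T.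
rewrite !inE Zf_phi; case: z => u v /=.
by rewrite !xpair_eqE !addr_eqr.
Qed.

Lemma count_fib (Q : pred (Sigma k * Sigma k)) :
  #|[set T : Rm | Q (Zf T)]| = (#|Q| * #|fib z0|)%N.
Proof.
rewrite -sum1dep_card (partition_big Zf Q) //= -sum_nat_const.
apply: eq_bigr => z Qz; rewrite -(fib_card z) sum1dep_card; apply: eq_card => T.
rewrite !inE; case: (eqVneq (Zf T) z) => [->|]; by rewrite ?Qz ?andbF.
Qed.

Definition Gset := [set z : Sigma k * Sigma k | good z.1 z.2].

Theorem core :
  (#|[set T : Rm | ev4 (h T s0) (h T s1) (h T s2) (h T s3)]| * (#|{: Sigma k}| * #|{: Sigma k}|))%N
  = (#|Gset| * #|{: Rm}|)%N.
Proof.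
have -> : [set T : Rm | ev4 (h T s0) (h T s1) (h T s2) (h T s3)] =
          [set T : Rm | Zf T \in Gset].
  by apply/setP => T; rewrite !inE good_iff.
rewrite count_fib.
have : #|[set T : Rm | predT (Zf T)]| = #|{: Rm}| by apply: eq_card => T; rewrite inE.
rewrite count_fib => <-.
have -> : #|@predT (Sigma k * Sigma k)| = (#|{: Sigma k}| * #|{: Sigma k}|)%N.
  by rewrite -card_prod; apply: eq_card.
rewrite -mulnA; congr (_ * _)%N; exact: mulnC.
Qed.
End Core.

Lemma card_Gset k : #|Gset k| = (#|{: Sigma k}| + (#|{: Sigma k}|.-1 * 2))%N.
Proof.
rewrite -sum1dep_card big_mkcond /=.
rewrite -(pair_big predT predT (fun u v : Sigma k => (good u v : nat))) /=.
rewrite (bigD1 0) //=; congr addn.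
  by rewrite /good eqxx /= sum1_card.
rewrite -(cardC1 (0 : Sigma k)) -sum_nat_const; apply: eq_bigr => u nu.
rewrite (bigD1 0) //= (bigD1 u) ?nu //= big1 => [|v /andP [nv0 nvu]].
  by rewrite /good !eqxx !orbT.
by rewrite /good (negbTE nv0) (negbTE nu) eq_sym (negbTE nvu).
Qed.

From mathcomp Require Import ring.

Lemma card_bij_pre (T U : finType) (f : T -> U) (P : pred U) :
  bijective f -> #|[set x | P (f x)]| = #|[set y | P y]|.
Proof.
move=> fb; have fi := bij_inj fb; rewrite -(card_imset _ fi); apply: eq_card => y.
case: fb => g fg gf; rewrite inE; apply/imsetP/idP => [[x] | Py].
  by rewrite inE => Px ->.
by exists (g y); rewrite ?inE gf.
Qed.

Section Main.
Variables (k c : nat) (x0 x1 x2 x3 : key k c) (j1 j2 : 'I_c).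
Hypothesis U : uniq [:: x0; x1; x2; x3].
Hypothesis EV : forall i, ev4 (x0 i) (x1 i) (x2 i) (x3 i).
Hypothesis Q1 : pat1 x0 x1 x2 x3 j1.
Hypothesis Q2 : pat2 x0 x1 x2 x3 j2.

Definition allev d (tab : tables k c d) :=
  all (fun j => ev4 (nth 0 (derived_seq tab x0) j) (nth 0 (derived_seq tab x1) j)
                    (nth 0 (derived_seq tab x2) j) (nth 0 (derived_seq tab x3) j))
      (iota 0 (c + d)).

Lemma survA d (tab : tables k c d) :
  survives [set x in [:: x0; x1; x2; x3]] tab = allev tab.
Proof.
rewrite /survives zero_set_img //; last first.
  move=> x y /ffunP H; apply/ffunP => j; move: (H (lshift d j)).
  by rewrite !ffunE /= !ds_prefix.
rewrite /allev -forall_iota; apply: eq_forallb => i; by rewrite !ffunE.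
Qed.

Lemma allev_step d (tab : tables k c d.+1) :
  allev tab = allev (restrict tab) &&
    ev4 (simple_tab (lastt tab) (derived_seq (restrict tab) x0))
        (simple_tab (lastt tab) (derived_seq (restrict tab) x1))
        (simple_tab (lastt tab) (derived_seq (restrict tab) x2))
        (simple_tab (lastt tab) (derived_seq (restrict tab) x3)).
Proof.
rewrite /allev.
have -> : iota 0 (c + d.+1) = rcons (iota 0 (c + d)) (c + d).
  by rewrite -addn1 addnA iotaD -cats1 add0n.
rewrite all_rcons andbC !ds_step; congr andb.
  apply: eq_in_all => j; rewrite mem_iota add0n => /andP [_ Hj].
  by rewrite !nth_rcons !ds_size Hj.
by rewrite !nth_rcons !ds_size ltnn eqxx.
Qed.

Lemma allev0 (tab : tables k c 0) : allev tab.
Proof.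
apply/allP => j; rewrite mem_iota add0n addn0 => /andP [_ Hj].
have := EV (Ordinal Hj); by rewrite !(ds_prefix tab _ (Ordinal Hj)).
Qed.

Definition splitt d (tab : tables k c d.+1) : tables k c d * R_ k c d :=
  (restrict tab, lastt tab).

Lemma splitt_inj d : injective (@splitt d).
Proof.
move=> t t' [] /ffunP H Hl; apply/ffunP => i.
case: (ltnP i d) => Hi.
  have -> : i = widen_ord (leqnSn d) (Ordinal Hi) by apply: val_inj.
  by move: (H (Ordinal Hi)); rewrite !ffunE.
have -> : i = ord_max by apply: val_inj; apply/eqP; rewrite eqn_leq Hi -ltnS ltn_ord.
exact: Hl.
Qed.

Lemma splitt_bij d : bijective (@splitt d).
Proof.
apply: inj_card_bij; first exact: splitt_inj.
by rewrite card_prod !card_tables big_ord_recr.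
Qed.

Local Notation N := #|{: Sigma k}|.
Local Notation G := #|Gset k|.

Lemma count_step d :
  #|[set tab : tables k c d.+1 | allev tab]| =
  (\sum_(t : tables k c d | allev t)
     #|[set T : R_ k c d | ev4 (simple_tab T (derived_seq t x0))
         (simple_tab T (derived_seq t x1)) (simple_tab T (derived_seq t x2))
         (simple_tab T (derived_seq t x3))]|)%N.
Proof.
pose P (p : tables k c d * R_ k c d) := allev p.1 &&
    ev4 (simple_tab p.2 (derived_seq p.1 x0)) (simple_tab p.2 (derived_seq p.1 x1))
        (simple_tab p.2 (derived_seq p.1 x2)) (simple_tab p.2 (derived_seq p.1 x3)).
have -> : [set tab : tables k c d.+1 | allev tab] = [set tab | P (splitt tab)].
  by apply/setP => tab; rewrite !inE allev_step.
rewrite (card_bij_pre P (@splitt_bij d)) -sum1dep_card.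
rewrite (_ : (\sum_(p | P p) 1)%N =
   \sum_(t : tables k c d) \sum_(T : R_ k c d) (if P (t, T) then 1 else 0))%N; last first.
  by rewrite pair_big big_mkcond /=; apply: eq_big => // [[t T]].
rewrite [RHS]big_mkcond /=; apply: eq_bigr => t _.
rewrite /P /=; case: (allev t) => /=; last by rewrite big1.
by rewrite -sum1dep_card [RHS]big_mkcond.
Qed.
End Main.

Section Main2.
Variables (k c : nat) (x0 x1 x2 x3 : key k c) (j1 j2 : 'I_c).
Hypothesis U : uniq [:: x0; x1; x2; x3].
Hypothesis EV : forall i, ev4 (x0 i) (x1 i) (x2 i) (x3 i).
Hypothesis Q1 : pat1 x0 x1 x2 x3 j1.
Hypothesis Q2 : pat2 x0 x1 x2 x3 j2.
Local Notation N := #|{: Sigma k}|.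
Local Notation G := #|Gset k|.

Lemma count_main d :
  (#|[set tab : tables k c d | allev x0 x1 x2 x3 tab]| * (N * N) ^ d
   = G ^ d * #|{: tables k c d}|)%N.
Proof.
elim: d => [|d IH].
  rewrite !expn0 muln1 mul1n; apply: eq_card => t; by rewrite inE (allev0 EV).
rewrite count_step.
have E : forall t : tables k c d, allev x0 x1 x2 x3 t ->
  (#|[set T : R_ k c d | ev4 (simple_tab T (derived_seq t x0))
         (simple_tab T (derived_seq t x1)) (simple_tab T (derived_seq t x2))
         (simple_tab T (derived_seq t x3))]| * (N * N) = G * #|{: R_ k c d}|)%N.
  move=> t Ht; apply: (core (j1 := lshift d j1) (j2 := lshift d j2)).
  - move=> j; move/allP: Ht => /(_ j); apply; by rewrite mem_iota add0n ltn_ord.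
  - by rewrite /= !ds_prefix.
  - by rewrite /= !ds_prefix.
rewrite expnS mulnA big_distrl /=.
rewrite (eq_bigr (fun _ => G * #|{: R_ k c d}|)%N); last by move=> t Ht; rewrite E.
rewrite sum_nat_const (card_tables k c d.+1) big_ord_recr /= -card_tables.
rewrite (_ : #|_| = #|[set tab : tables k c d | allev x0 x1 x2 x3 tab]|); last first.
  by apply: eq_card => t; rewrite inE.
rewrite mulnAC IH expnS; ring.
Qed.
End Main2.

Unset Implicit Arguments.

Theorem corollary8p2 (k c d : nat) (Y : {set key k c}) :
  (2 <= c)%N -> (1 <= d)%N -> zero_set Y -> #|Y| = 4%N ->
  survive_prob d Y =
  ((3 - 2 / (#|{: Sigma k}|%:R : rat)) / (#|{: Sigma k}|%:R : rat)) ^+ d.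
Proof.
move=> _ _ zY cY.
have [x0 [x1 [x2 [x3 [j1 [j2 [eY U EV Q1 Q2]]]]]]] := structure zY cY.
rewrite /survive_prob.
have -> : [set tab : tables k c d | survives Y tab] = [set tab | allev x0 x1 x2 x3 tab].
  by apply/setP => tab; rewrite !inE eY survA.
have H := count_main EV Q1 Q2 d.
rewrite card_Gset in H.
have T0 : (0 < #|{: tables k c d}|)%N.
  apply/card_gt0P.
  exists (finfun (fun i : 'I_d => ([ffun _ => [ffun _ => 0]] :
     {ffun 'I_(c + i) -> {ffun Sigma k -> Sigma k}})) : tables k c d).
  done.
have [n En] : exists n, #|{: Sigma k}| = n.+1.
  have : (0 < #|{: Sigma k}|)%N by apply/card_gt0P; exists 0.
  by case: #|{: Sigma k}| => // n _; exists n.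
rewrite En /= in H *.
move: T0 H.
set S := #|[set tab | _]|; set Tot := #|{: tables k c d}| => T0.
move/(congr1 (fun m => m%:R : rat)); rewrite /= !natrM !natrX !natrD !natrM => H.
have Bn0 : ((n.+1%:R * n.+1%:R : rat) ^+ d != 0) by rewrite expf_neq0 // mulf_neq0 // pnatr_eq0.
have -> : (S%:R : rat) = (n.+1%:R + n%:R * 2%:R)^+d * Tot%:R / (n.+1%:R * n.+1%:R)^+d.
  by rewrite -H mulfK.
have -> : (3 - 2 / n.+1%:R) / n.+1%:R = ((n.+1%:R + n%:R * 2%:R) / (n.+1%:R * n.+1%:R) : rat).
  rewrite -natr1; field; by rewrite nat1r pnatr_eq0.
rewrite (expr_div_n (R := rat)).
have Tn0 : (Tot%:R : rat) != 0 by rewrite pnatr_eq0 -lt0n.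
by rewrite mulrAC mulfK.
Qed.
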